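(* Let $M$ be an $\mathbf{FB}$-module and $a:\mathrm{Sym}(\mathbf V)\otimes M\to\mathrm{Sym}(\mathbf V)\otimes M$ a map, with associated symmetric operation $\phi$ given by $a(t^B\otimes x)=\sum_{A\subseteq S}t^A\otimes\phi^S_{A,B}(x)$ for $B\subseteq S$, $x\in M(S\setminus B)$. Then $a$ defines a representation of $\underline{\mathfrak a}(\mathbf V\oplus\mathbf V^* )$ if and only if $\phi$ satisfies the following for all finite sets $S$ and subsets $A,B,C,D\subseteq S$ with $A\cap B=\emptyset$, $C\cap D=\emptyset$: (B1) if $A\cap C=B\cap D=\emptyset$, then $\phi^{S\setminus C}_{D,A}\circ\phi^{S\setminus A}_{C,B}=\phi^{S\setminus D}_{C,B}\circ\phi^{S\setminus B}_{D,A}$; (B2) if $A\cap C=\emptyset$ and $B\cap D\ne\emptyset$, then $\phi^{S\setminus C}_{D,A}\circ\phi^{S\setminus A}_{C,B}=\sum_{\emptyset\ne X\subseteq B\cap D}\phi^{S\setminus X}_{(D\setminus X)\cup C,\,A\cup(B\setminus X)}$; (B3) if $A\cap C\ne\emptyset$ and $B\cap D\ne\emptyset$, then $\sum_{X\subseteq B\cap D}\phi^{S\setminus X}_{(D\setminus X)\cup C,\,A\cup(B\setminus X)}=\sum_{X\subseteq A\cap C}\phi^{S\setminus X}_{(C\setminus X)\cup D,\,B\cup(A\setminus X)}$.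
   Context: $k$ is a commutative ring; $\mathbf{FB}$-modules are functors from finite sets and bijections to $k$-modules, $(M\otimes N)(S)=\bigoplus_{T\subseteq S}M(T)\otimes N(S\setminus T)$, symmetry $\tau$. $\mathbf V$ is $k$ on singletons, $0$ otherwise. $P=\mathrm{Sym}(\mathbf V)=\bigoplus_n\mathrm{Sym}^n(\mathbf V)$ with $\mathrm{Sym}^n(\mathbf V)(S)$ free on $t^S$ if $|S|=n$ and $0$ otherwise, so $(P\otimes M)(S)=\bigoplus_{B\subseteq S}t^B\otimes M(S\setminus B)$; divided powers are identified with $P$ via the averaging isomorphism. $m(t^A\otimes t^B)=t^{A\cup B}$, $\Delta(t^B)=\sum_{B=B_1\sqcup B_2}t^{B_1}\otimes t^{B_2}$. $a$ is a representation of the curried Weyl Lie algebra $\underline{\mathfrak a}(\mathbf V\oplus\mathbf V^* )$ if $[a_1,a_2]=a'-a''$, where $a_2=\mathrm{id}_P\otimes a$, $a_1=\tau(\mathrm{id}_P\otimes a)\tau$, $[a_1,a_2]=a_1a_2-a_2a_1:P\otimes P\otimes M\to P\otimes P\otimes M$, $a'=(m\otimes\mathrm{id}\otimes\mathrm{id})(\mathrm{id}\otimes\Delta\otimes\mathrm{id})(\mathrm{id}_P\otimes a)(\mathrm{id}\otimes m\otimes\mathrm{id})(\tau\otimes\mathrm{id}\otimes\mathrm{id})(\mathrm{id}\otimes\Delta\otimes\mathrm{id})$, $a''=\tau a'\tau$. The maps $\phi^S_{A,B}:M(S\setminus B)\to M(S\setminus A)$ are natural in bijections. *)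

(* Defs.v *)
(* Finite sets are modelled as {fset nat}; every
   finite set is in bijection with one of these, so FB is (equivalent to) the
   groupoid of finite subsets of nat and bijections between them. *)
From HB Require Import structures.
From mathcomp Require Import all_boot all_order all_algebra.
From mathcomp Require Import finmap.
Set Implicit Arguments. Unset Strict Implicit. Unset Printing Implicit Defensive.
Import GRing.Theory.
Local Open Scope fset_scope.
Local Open Scope ring_scope.

Section FB.
Variable k : comPzRingType.
Variable M : {fset nat} -> lmodType k.

(* Transport along an equality of finite sets (identity when S = T; never used
   in the statement for S <> T, where it is 0). *)
Definition mcast (S T : {fset nat}) (x : M S) : M T :=
  match S =P T with
  | ReflectT e => eq_rect S (fun X => M X) x T e
  | ReflectF _ => 0
  end.
Arguments mcast {S T} x.

Definition bij_on (f : nat -> nat) (S T : {fset nat}) : Prop :=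
  {in S &, injective f} /\ [fset f x | x in S] = T.

Definition fimg (f : nat -> nat) (A : {fset nat}) : {fset nat} :=
  [fset f x | x in A].

(* FB-module structure: Mact S T f : M S -> M T is M(f) for a bijection
   f : S -> T. *)
Definition isFBmod
  (Mact : forall S T : {fset nat}, (nat -> nat) -> M S -> M T) : Prop :=
  [/\ (forall S T f, bij_on f S T ->
         forall (c : k) (x y : M S), Mact S T f (c *: x + y) = c *: Mact S T f x + Mact S T f y),
      (forall S (x : M S), Mact S S id x = x),
      (forall S T U f g, bij_on f S T -> bij_on g T U ->
         forall x, Mact T U g (Mact S T f x) = Mact S U (g \o f) x) &
      (forall S T f g, {in S, f =1 g} -> forall x, Mact S T f x = Mact S T g x)].

(* (Sym(V) (x) M)(S) = (+)_{B <= S} t^B (x) M(S\B): an element is a family of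
   coefficients indexed by B (only B <= S is relevant). *)
Definition PM (S : {fset nat}) := forall B : {fset nat}, M (S `\` B).
(* (P (x) P (x) M)(S) = (+)_{B1,B2 <= S disjoint} t^B1 (x) t^B2 (x) M(S\(B1 u B2)) *)
Definition PPM (S : {fset nat}) := forall B1 B2 : {fset nat}, M (S `\` (B1 `|` B2)).
Definition PPPM (S : {fset nat}) :=
  forall B1 B2 B3 : {fset nat}, M (S `\` (B1 `|` B2 `|` B3)).

Variable a : forall S, PM S -> PM S.

Definition idPa S (f : PPM S) : PPM S :=
  fun B1 B2 => mcast (@a (S `\` B1) (fun B => mcast (f B1 B)) B2).
Definition tau2 S (f : PPM S) : PPM S := fun B1 B2 => mcast (f B2 B1).
Definition tau3 S (f : PPPM S) : PPPM S := fun B1 B2 B3 => mcast (f B2 B1 B3).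
(* id (x) Delta (x) id : t^B1 (x) t^B2 (x) x |-> sum_{B2 = Y1 u Y2} t^B1 (x) t^Y1 (x) t^Y2 (x) x *)
Definition idDelta S (f : PPM S) : PPPM S :=
  fun B1 Y1 Y2 => mcast (f B1 (Y1 `|` Y2)).
(* id (x) m (x) id : t^C (x) t^E1 (x) t^E2 (x) x |-> t^C (x) t^(E1 u E2) (x) x *)
Definition idm S (f : PPPM S) : PPM S :=
  fun C E => \sum_(E1 <- fpowerset E) mcast (f C E1 (E `\` E1)).
Definition midid S (f : PPPM S) : PPM S :=
  fun E C => \sum_(E1 <- fpowerset E) mcast (f E1 (E `\` E1) C).

Definition a2 S (f : PPM S) : PPM S := idPa f.
Definition a1 S (f : PPM S) : PPM S := tau2 (idPa (tau2 f)).
Definition a' S (f : PPM S) : PPM S :=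
  midid (idDelta (idPa (idm (tau3 (idDelta f))))).
Definition a'' S (f : PPM S) : PPM S := tau2 (a' (tau2 f)).

(* a is a representation of the curried Weyl Lie algebra:
   [a1, a2] = a' - a''  as maps  P (x) P (x) M -> P (x) P (x) M,
   compared on all (relevant) components (B1, B2 disjoint subsets of S). *)
Definition weyl_rep : Prop :=
  forall S (f : PPM S) (B1 B2 : {fset nat}),
    B1 `<=` S -> B2 `<=` S -> B1 `&` B2 = fset0 ->
    a1 (a2 f) B1 B2 - a2 (a1 f) B1 B2 = a' f B1 B2 - a'' f B1 B2.

End FB.
Arguments mcast {k M S T} x.

Section Phi.
Local Unset Implicit Arguments.
Variable k : comPzRingType.
Variable M : {fset nat} -> lmodType k.
Variable phi : forall S A B : {fset nat}, M (S `\` B) -> M (S `\` A).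

Definition disj (A B : {fset nat}) : bool := A `&` B == fset0.

Definition assoc_op (a : forall S, PM M S -> PM M S) : Prop :=
  forall S (f : PM M S) (A : {fset nat}), A `<=` S ->
    a S f A = \sum_(B <- fpowerset S) phi S A B (f B).

Definition phi_linear : Prop :=
  forall S A B (c : k) (x y : M (S `\` B)),
    phi S A B (c *: x + y) = c *: phi S A B x + phi S A B y.

Definition phi_natural (Mact : forall S T : {fset nat}, (nat -> nat) -> M S -> M T) : Prop :=
  forall S S' sigma A B, bij_on sigma S S' -> A `<=` S -> B `<=` S ->
    forall x : M (S `\` B),
      Mact (S `\` A) (S' `\` fimg sigma A) sigma (phi S A B x)
      = phi S' (fimg sigma A) (fimg sigma B) (Mact (S `\` B) (S' `\` fimg sigma B) sigma x).

(* All conditions below are equalities of maps M(S\(A u B)) -> M(S\(C u D));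
   mcast only identifies equal sets. *)
Definition condB1 : Prop :=
  forall S A B C D, A `<=` S -> B `<=` S -> C `<=` S -> D `<=` S ->
    disj A B -> disj C D -> disj A C -> disj B D ->
    forall x : M (S `\` (A `|` B)),
      (mcast (phi (S `\` C) D A (mcast (phi (S `\` A) C B (mcast x)))) : M (S `\` (C `|` D)))
      = mcast (phi (S `\` D) C B (mcast (phi (S `\` B) D A (mcast x)))).

Definition condB2 : Prop :=
  forall S A B C D, A `<=` S -> B `<=` S -> C `<=` S -> D `<=` S ->
    disj A B -> disj C D -> disj A C -> ~~ disj B D ->
    forall x : M (S `\` (A `|` B)),
      (mcast (phi (S `\` C) D A (mcast (phi (S `\` A) C B (mcast x)))) : M (S `\` (C `|` D)))
      = \sum_(X <- fpowerset (B `&` D) | X != fset0)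
          mcast (phi (S `\` X) ((D `\` X) `|` C) (A `|` (B `\` X)) (mcast x)).

Definition condB3 : Prop :=
  forall S A B C D, A `<=` S -> B `<=` S -> C `<=` S -> D `<=` S ->
    disj A B -> disj C D -> ~~ disj A C -> ~~ disj B D ->
    forall x : M (S `\` (A `|` B)),
      (\sum_(X <- fpowerset (B `&` D))
          mcast (phi (S `\` X) ((D `\` X) `|` C) (A `|` (B `\` X)) (mcast x))
        : M (S `\` (C `|` D)))
      = \sum_(X <- fpowerset (A `&` C))
          mcast (phi (S `\` X) ((C `\` X) `|` D) (B `|` (A `\` X)) (mcast x)).

End Phi.
Arguments disj : clear implicits.
Arguments assoc_op {k M} phi a.
Arguments phi_linear {k M} phi.
Arguments phi_natural {k M} phi Mact.
Arguments condB1 {k M} phi.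
Arguments condB2 {k M} phi.
Arguments condB3 {k M} phi.

(* Main.v *)
Require Import Defs.
From HB Require Import structures.
From mathcomp Require Import all_boot all_order all_algebra.
From mathcomp Require Import finmap.
Set Implicit Arguments. Unset Strict Implicit. Unset Printing Implicit Defensive.
Import GRing.Theory.
Local Open Scope fset_scope.
Local Open Scope ring_scope.

Lemma disjE (A B : {fset nat}) : disj A B -> forall x, (x \in A) && (x \in B) = false.
Proof. by move=> /eqP H x; rewrite -in_fsetI H inE. Qed.

Ltac fprep x :=
  repeat match goal with
  | H : is_true (fsubset ?A ?B) |- _ => move: (fsubsetP H x); clear H
  | H : is_true (disj ?A ?B) |- _ =>
      move: (disjE H x); clear H
  | H : is_true (~~ disj ?A ?B) |- _ => clear H
  | H : ~ _ |- _ => clear H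
  end.
Ltac fcases :=
  repeat match goal with |- context [?y \in ?X] =>
    let h := fresh "h" in case h: (y \in X); rewrite ?h; clear h end.
Ltac bfin := cbn; unfold is_true; intuition congruence.
Ltac fsolve :=
  match goal with
  | |- @eq _ _ _ => let x := fresh "x" in apply/fsetP => x; fprep x; rewrite ?inE; fcases; bfin
  | |- is_true (fsubset _ _) => let x := fresh "x" in apply/fsubsetP => x; fprep x; rewrite ?inE; fcases; bfin
  | |- is_true (disj _ _) => let x := fresh "x" in apply/eqP/fsetP => x; fprep x; rewrite ?inE; fcases; bfin
  end.

Section Cast.
Variable k : comPzRingType.
Variable M : {fset nat} -> lmodType k.

Lemma mcast_id S (x : M S) : mcast x = x.
Proof. by rewrite /mcast; case: eqP => // e; rewrite (eq_irrelevance e erefl). Qed.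

Lemma mcastK S T U (x : M S) : S = T -> (mcast (mcast x : M T) : M U) = mcast x.
Proof. by move=> e; subst T; rewrite mcast_id. Qed.

Lemma mcast0 S T : (mcast (0 : M S) : M T) = 0.
Proof. by rewrite /mcast; case: eqP => // e; subst T. Qed.

Lemma mcastD S T (x y : M S) : (mcast (x + y) : M T) = mcast x + mcast y.
Proof. by rewrite /mcast; case: eqP => // e; [subst T | rewrite addr0]. Qed.

Lemma mcastN S T (x : M S) : (mcast (- x) : M T) = - mcast x.
Proof. by rewrite /mcast; case: eqP => // e; [subst T | rewrite oppr0]. Qed.

Lemma mcast_sum S T (I : Type) (r : seq I) (P : pred I) (F : I -> M S) :
  (mcast (\sum_(i <- r | P i) F i) : M T) = \sum_(i <- r | P i) mcast (F i).
Proof. exact: (big_morph _ (@mcastD S T) (@mcast0 S T)). Qed.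

Lemma mcast_eq S T U (x : M S) (y : M T) : S = T -> mcast x = y -> (mcast x : M U) = mcast y.
Proof. by move=> e; subst T; rewrite mcast_id => ->. Qed.

Local Unset Implicit Arguments.
Variable phi : forall S A B : {fset nat}, M (S `\` B) -> M (S `\` A).
Hypothesis Hlin : phi_linear phi.

Lemma phiD S A B (x y : M (S `\` B)) : phi S A B (x + y) = phi S A B x + phi S A B y.
Proof. by have := Hlin S A B 1 x y; rewrite !scale1r. Qed.
Lemma phi0 S A B : phi S A B 0 = 0.
Proof. by have := phiD S A B 0 0; rewrite addr0 => /(congr1 (fun z => z - phi S A B 0)); rewrite subrr addrK. Qed.
Lemma phi_sum S A B (I : Type) (r : seq I) (P : pred I) (F : I -> M (S `\` B)) :
  phi S A B (\sum_(i <- r | P i) F i) = \sum_(i <- r | P i) phi S A B (F i).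
Proof. exact: (big_morph _ (@phiD S A B) (@phi0 S A B)). Qed.

Lemma phi_tr S S' A A' B B' (x : M (S `\` B)) U : S = S' -> A = A' -> B = B' ->
  (mcast (phi S A B x) : M U) = mcast (phi S' A' B' (mcast x)).
Proof. by move=> e1 e2 e3; subst; rewrite mcast_id. Qed.
End Cast.

Lemma big_restrict (R : zmodType) (I : eqType) (s t : seq I) (P : pred I) (F : I -> R) :
  uniq s -> uniq t -> (forall x, (x \in t) = (x \in s) && P x) ->
  \sum_(x <- t) F x = \sum_(x <- s | P x) F x.
Proof.
move=> us ut H; rewrite -[RHS]big_filter; apply: perm_big; apply: uniq_perm => //.
  exact: filter_uniq.
by move=> x; rewrite mem_filter H andbC.
Qed.

Lemma big_reindex (R : zmodType) (I J : eqType) (s : seq I) (t : seq J) (P : pred I) (Q : pred J)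
  (h : I -> J) (h' : J -> I) (F : J -> R) :
  uniq s -> uniq t ->
  (forall x, x \in s -> P x -> [/\ h x \in t, Q (h x) & h' (h x) = x]) ->
  (forall y, y \in t -> Q y -> [/\ h' y \in s, P (h' y) & h (h' y) = y]) ->
  \sum_(x <- s | P x) F (h x) = \sum_(y <- t | Q y) F y.
Proof.
move=> us ut H1 H2.
have -> : \sum_(x <- s | P x) F (h x) = \sum_(y <- map h [seq x <- s | P x]) F y by rewrite big_map big_filter.
rewrite -[RHS]big_filter; apply: perm_big.
apply: uniq_perm; last first.
- move=> y; rewrite mem_filter; apply/mapP/andP.
    by case=> x; rewrite mem_filter => /andP [Px xs] ->; have [] := H1 x xs Px.
  by case=> Qy yt; have [hs Ph hh] := H2 y yt Qy; exists (h' y) => //; rewrite mem_filter Ph.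
- exact: filter_uniq.
- rewrite map_inj_in_uniq; first exact: filter_uniq.
  move=> x1 x2; rewrite !mem_filter => /andP [P1 s1] /andP [P2 s2] e.
  by have [_ _ <-] := H1 x1 s1 P1; have [_ _ <-] := H1 x2 s2 P2; rewrite e.
Qed.

Lemma pow_restrict (R : zmodType) (S T : {fset nat}) (F : {fset nat} -> R) :
  T `<=` S -> \sum_(X <- fpowerset T) F X = \sum_(X <- fpowerset S | X `<=` T) F X.
Proof.
move=> TS; apply: big_restrict; try exact: fset_uniq.
move=> X; rewrite !fpowersetE; apply/idP/andP => [XT|[]//]; split=> //.
exact: fsubset_trans XT TS.
Qed.
Lemma eq_big_pow (R : zmodType) (S : {fset nat}) (P1 P2 : pred {fset nat}) (F1 F2 : {fset nat} -> R) :
  (forall X, X `<=` S -> P1 X = P2 X) -> (forall X, X `<=` S -> P1 X -> F1 X = F2 X) ->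
  \sum_(X <- fpowerset S | P1 X) F1 X = \sum_(X <- fpowerset S | P2 X) F2 X.
Proof.
move=> HP HF; rewrite big_seq_cond [RHS]big_seq_cond; apply: eq_big => [X|X /andP [XS P1X]].
  by case XS: (X \in fpowerset S) => //=; apply: HP; rewrite -fpowersetE.
by apply: HF => //; rewrite -fpowersetE.
Qed.

Lemma disjC (A B : {fset nat}) : disj A B = disj B A.
Proof. exact: fdisjoint_sym. Qed.

Lemma swapPQ (R : zmodType) (s : seq {fset nat}) (F : {fset nat} -> {fset nat} -> R) :
  \sum_(P <- s) \sum_(Q <- s | disj P Q) F P Q = \sum_(Q <- s) \sum_(P <- s | disj P Q) F P Q.
Proof.
rewrite (eq_bigr (fun P => \sum_(Q <- s) if disj P Q then F P Q else 0)); last by move=> P _; rewrite big_mkcond.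
rewrite exchange_big; apply: eq_bigr => Q _; by rewrite [RHS]big_mkcond.
Qed.

Lemma subD_disj (X S B : {fset nat}) : (X `<=` S `\` B) = (X `<=` S) && disj X B.
Proof. by rewrite fsubsetD. Qed.

Section Main.
Local Unset Implicit Arguments.
Variable k : comPzRingType.
Variable M : {fset nat} -> lmodType k.
Variable a : forall S, PM M S -> PM M S.
Variable phi : forall S A B : {fset nat}, M (S `\` B) -> M (S `\` A).
Hypothesis Hlin : phi_linear phi.
Hypothesis Ha : assoc_op phi a.

Definition t1 S B1 B2 P Q (x : M (S `\` (P `|` Q))) : M (S `\` (B1 `|` B2)) :=
  if disj P B2 then mcast (phi (S `\` B2) B1 P (mcast (phi (S `\` P) B2 Q (mcast x)))) else 0.

Lemma A12 S (f : PPM M S) B1 B2 : B1 `<=` S -> B2 `<=` S -> disj B1 B2 ->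
  a1 a (a2 a f) B1 B2 = \sum_(P <- fpowerset S) \sum_(Q <- fpowerset S | disj P Q) t1 S B1 B2 P Q (f P Q).
Proof.
move=> s1 s2 d12.
rewrite /a1 /a2 /tau2 /idPa /=.
rewrite Ha; last by fsolve.
rewrite !mcast_sum (pow_restrict _ (S := S)); last by fsolve.
rewrite [RHS](bigID (fun P => disj P B2)) /= [X in _ + X]big1 ?addr0; last first.
  move=> P /negbTE nd; apply: big1 => Q _; by rewrite /t1 nd.
apply: eq_big_pow => [P PS|P PS]; first by rewrite subD_disj PS.
rewrite subD_disj PS /= => dP.
rewrite mcastK; last by fsolve.
rewrite mcastK; last by fsolve.
rewrite mcastK; last by fsolve.
rewrite Ha; last by fsolve.
rewrite mcast_sum.
rewrite (@phi_sum _ _ _ Hlin) mcast_sum.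
rewrite (pow_restrict _ (S := S)); last by fsolve.
apply: eq_big_pow => [Q QS|Q QS]; first by rewrite subD_disj QS disjC.
rewrite subD_disj QS /= => dQ.
by rewrite /t1 dP.
Qed.

Definition t2 S B1 B2 P Q (x : M (S `\` (P `|` Q))) : M (S `\` (B1 `|` B2)) :=
  if disj Q B1 then mcast (phi (S `\` B1) B2 Q (mcast (phi (S `\` Q) B1 P (mcast x)))) else 0.

Lemma A21 S (f : PPM M S) B1 B2 : B1 `<=` S -> B2 `<=` S -> disj B1 B2 ->
  a2 a (a1 a f) B1 B2 = \sum_(P <- fpowerset S) \sum_(Q <- fpowerset S | disj P Q) t2 S B1 B2 P Q (f P Q).
Proof.
move=> s1 s2 d12.
rewrite /a1 /a2 /tau2 /idPa /=.
rewrite Ha; last by fsolve.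
rewrite !mcast_sum (pow_restrict _ (S := S)); last by fsolve.
rewrite [RHS]swapPQ.
rewrite [RHS](bigID (fun Q => disj Q B1)) /= [X in _ + X]big1 ?addr0; last first.
  move=> Q /negbTE nd; apply: big1 => P _; by rewrite /t2 nd.
apply: eq_big_pow => [Q QS|Q QS]; first by rewrite subD_disj QS.
rewrite subD_disj QS /= => dQ.
rewrite mcastK; last by fsolve.
rewrite mcastK; last by fsolve.
rewrite Ha; last by fsolve.
rewrite mcast_sum (@phi_sum _ _ _ Hlin) mcast_sum (pow_restrict _ (S := S)); last by fsolve.
apply: eq_big_pow => [P PS|P PS]; first by rewrite subD_disj PS.
rewrite subD_disj PS /= => dP.
rewrite /t2 dQ mcastK //; fsolve.
Qed.

Definition H3 S B1 B2 X P Q (x : M (S `\` (P `|` Q))) : M (S `\` (B1 `|` B2)) :=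
  mcast (phi (S `\` X) ((B1 `\` X) `|` B2) (P `|` (Q `\` X)) (mcast x)).
Definition t3 S B1 B2 P Q (x : M (S `\` (P `|` Q))) : M (S `\` (B1 `|` B2)) :=
  \sum_(X <- fpowerset (Q `&` B1)) H3 S B1 B2 X P Q x.

Lemma A3 S (f : PPM M S) B1 B2 : B1 `<=` S -> B2 `<=` S -> disj B1 B2 ->
  a' a f B1 B2 = \sum_(P <- fpowerset S) \sum_(Q <- fpowerset S | disj P Q) t3 S B1 B2 P Q (f P Q).
Proof.
move=> s1 s2 d12.
rewrite /a' /midid /idDelta /idPa /idm /tau3 /=.
transitivity (\sum_(E1 <- fpowerset B1) \sum_(P <- fpowerset S)
   \sum_(Q <- fpowerset S | disj P Q && (E1 `<=` Q)) H3 S B1 B2 E1 P Q (f P Q)).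
  rewrite big_seq [RHS]big_seq; apply: eq_bigr => E1; rewrite fpowersetE => E1B1.
  rewrite mcastK; last by fsolve.
  rewrite mcastK; last by fsolve.
  rewrite Ha; last by fsolve.
  rewrite mcast_sum (pow_restrict _ (S := S)); last by fsolve.
  under eq_big_pow => [B BS|B BS BE1].
  - over.
  - rewrite mcast_sum (@phi_sum _ _ _ Hlin) mcast_sum (pow_restrict _ (S := S)); last by fsolve.
    over.
  rewrite /= (exchange_big_dep predT) //= big_seq_cond [RHS]big_seq_cond.
  apply: eq_bigr => P /andP [+ _]; rewrite fpowersetE => PS.
  transitivity (\sum_(B <- fpowerset S | (B `<=` S `\` E1) && (P `<=` B))
      H3 S B1 B2 E1 P (E1 `|` (B `\` P)) (f P (E1 `|` (B `\` P)))).
    apply: eq_big_pow => // B BS /andP [BE PB].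
    rewrite /H3 (@phi_tr _ _ phi _ (S `\` E1) _ (B1 `\` E1 `|` B2) _ (P `|` ((E1 `|` (B `\` P)) `\` E1))) //; last by fsolve.
    rewrite !mcastK //; fsolve.
  apply: (@big_reindex _ _ _ _ _ _ _ (fun B => E1 `|` (B `\` P)) (fun Q => P `|` (Q `\` E1))
           (fun Q => H3 S B1 B2 E1 P Q (f P Q))); try exact: fset_uniq.
    move=> B; rewrite fpowersetE => BS /andP [BE PB].
    by split; [rewrite fpowersetE; fsolve | apply/andP; split; fsolve | fsolve].
  move=> Q; rewrite fpowersetE => QS /andP [dPQ EQ].
  by split; [rewrite fpowersetE; fsolve | apply/andP; split; fsolve | fsolve].
rewrite exchange_big /=; apply: eq_bigr => P _.
rewrite (exchange_big_dep (fun Q => disj P Q)) /=; last by move=> ? ? _ /andP [].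
apply: eq_bigr => Q dPQ.
rewrite /t3 (pow_restrict _ (S := B1)); last by fsolve.
by apply: eq_big_pow => // X XB1; rewrite dPQ /= fsubsetI XB1 andbT.
Qed.
Definition t4 S B1 B2 P Q (x : M (S `\` (P `|` Q))) : M (S `\` (B1 `|` B2)) :=
  mcast (t3 S B2 B1 Q P (mcast x)).

Lemma A4 S (f : PPM M S) B1 B2 : B1 `<=` S -> B2 `<=` S -> disj B1 B2 ->
  a'' a f B1 B2 = \sum_(P <- fpowerset S) \sum_(Q <- fpowerset S | disj P Q) t4 S B1 B2 P Q (f P Q).
Proof.
move=> s1 s2 d12.
rewrite /a'' {1}/tau2 A3 //; last by rewrite disjC.
rewrite mcast_sum swapPQ; apply: eq_bigr => P _.
rewrite mcast_sum; apply: eq_big => // Q; first exact: disjC.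
Qed.

Lemma pow_split0 (R : zmodType) (T : {fset nat}) (F : {fset nat} -> R) :
  \sum_(X <- fpowerset T) F X = F fset0 + \sum_(X <- fpowerset T | X != fset0) F X.
Proof. by rewrite (bigD1_seq fset0) ?fset_uniq // fpowersetE fsub0set. Qed.

Lemma pow_empty (R : zmodType) (T : {fset nat}) (F : {fset nat} -> R) :
  T = fset0 -> \sum_(X <- fpowerset T) F X = F fset0.
Proof. by move=> ->; rewrite fpowerset0 big_seq_fset1. Qed.

Lemma pow_disj (R : zmodType) (A B : {fset nat}) (F : {fset nat} -> R) :
  disj A B -> \sum_(X <- fpowerset (A `&` B)) F X = F fset0.
Proof. by move=> /eqP e; apply: pow_empty. Qed.

Lemma H3_0 S B1 B2 P Q (x : M (S `\` (P `|` Q))) :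
  mcast (H3 S B2 B1 fset0 Q P (mcast x)) = H3 S B1 B2 fset0 P Q x.
Proof.
rewrite /H3 mcastK; last by fsolve.
rewrite (@phi_tr _ _ phi (S `\` fset0) (S `\` fset0) _ ((B1 `\` fset0) `|` B2) _ (P `|` (Q `\` fset0))); try fsolve.
rewrite mcastK; last by fsolve.
by rewrite mcastK //; fsolve.
Qed.

Lemma H3_cast S B1 B2 X P Q (x : M (S `\` (P `|` Q))) : X `<=` B1 ->
  (mcast (mcast (phi (S `\` X) ((B1 `\` X) `|` B2) (P `|` (Q `\` X)) (mcast x)) : M (S `\` (B2 `|` B1))) : M (S `\` (B1 `|` B2)))
  = H3 S B1 B2 X P Q x.
Proof. by move=> XB; rewrite /H3 mcastK //; fsolve. Qed.

Lemma H4_cast S B1 B2 X P Q (y : M (S `\` (Q `|` P))) : X `<=` B2 ->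
  (mcast (H3 S B2 B1 X Q P y) : M (S `\` (B1 `|` B2)))
  = mcast (phi (S `\` X) ((B2 `\` X) `|` B1) (Q `|` (P `\` X)) (mcast y)).
Proof. by move=> XB; rewrite /H3 mcastK //; fsolve. Qed.

Lemma fwd (c1 : condB1 phi) (c2 : condB2 phi) (c3 : condB3 phi) S B1 B2 P Q (x : M (S `\` (P `|` Q))) :
  B1 `<=` S -> B2 `<=` S -> disj B1 B2 -> P `<=` S -> Q `<=` S -> disj P Q ->
  t1 S B1 B2 P Q x - t2 S B1 B2 P Q x = t3 S B1 B2 P Q x - t4 S B1 B2 P Q x.
Proof.
move=> s1 s2 d12 PS QS dPQ.
have d21 : disj B2 B1 by rewrite disjC.
have dQP : disj Q P by rewrite disjC.
rewrite /t1 /t2 /t4 /t3.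
case dPB: (disj P B2); case dQB: (disj Q B1).
- have E := c1 S P Q B2 B1 PS QS s2 s1 dPQ d21 dPB dQB x.
  have E' := congr1 (fun z => mcast z : M (S `\` (B1 `|` B2))) E.
  rewrite /= !mcastK in E'; try fsolve.
  by rewrite E' !pow_disj // 1?disjC // H3_0 !subrr.
- have E := c2 S P Q B2 B1 PS QS s2 s1 dPQ d21 dPB (negbT dQB) x.
  have E' := congr1 (fun z => mcast z : M (S `\` (B1 `|` B2))) E.
  rewrite /= mcastK in E'; last by fsolve.
  rewrite (@pow_disj _ P B2) // H3_0 pow_split0 subr0 addrAC subrr add0r E' mcast_sum.
  rewrite big_seq_cond [RHS]big_seq_cond; apply: eq_bigr => X /andP [+ _].
  rewrite fpowersetE => XQ; apply: H3_cast; fsolve.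
- have E := c2 S Q P B1 B2 QS PS s1 s2 dQP d12 dQB (negbT dPB) (mcast x).
  rewrite mcastK in E; last by fsolve.
  rewrite (@pow_disj _ Q B1) // pow_split0 mcastD H3_0 sub0r opprD addrA subrr add0r; congr (- _).
  rewrite E mcast_sum big_seq_cond [RHS]big_seq_cond; apply: eq_bigr => X /andP [+ _].
  rewrite fpowersetE => XP; rewrite H4_cast //; fsolve.
- have E := c3 S P Q B2 B1 PS QS s2 s1 dPQ d21 (negbT dPB) (negbT dQB) x.
  rewrite subrr; apply/eqP; rewrite eq_sym subr_eq0; apply/eqP.
  rewrite mcast_sum.
  transitivity (\sum_(X <- fpowerset (Q `&` B1)) (mcast (mcast (phi (S `\` X) ((B1 `\` X) `|` B2) (P `|` (Q `\` X)) (mcast x)) : M (S `\` (B2 `|` B1))) : M (S `\` (B1 `|` B2)))).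
    rewrite big_seq [RHS]big_seq; apply: eq_bigr => X; rewrite fpowersetE => XQ.
    rewrite H3_cast //; fsolve.
  rewrite -mcast_sum E mcast_sum.
  rewrite big_seq [RHS]big_seq; apply: eq_bigr => X; rewrite fpowersetE => XP.
  rewrite H4_cast; last by fsolve.
  rewrite !mcastK //; fsolve.
Qed.

Lemma main_fwd : condB1 phi -> condB2 phi -> condB3 phi -> weyl_rep a.
Proof.
move=> c1 c2 c3 S f B1 B2 s1 s2 /eqP d12.
rewrite A12 // A21 // A3 // A4 //.
rewrite -!sumrB big_seq [RHS]big_seq; apply: eq_bigr => P; rewrite fpowersetE => PS.
rewrite -!sumrB big_seq_cond [RHS]big_seq_cond; apply: eq_bigr => Q /andP [+ dPQ]; rewrite fpowersetE => QS.
exact: fwd.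
Qed.

Lemma collapse S (V : zmodType) (T : forall P Q : {fset nat}, M (S `\` (P `|` Q)) -> V)
  P Q (x : M (S `\` (P `|` Q))) :
  (forall P Q, T P Q 0 = 0) -> P `<=` S -> Q `<=` S -> disj P Q ->
  \sum_(P' <- fpowerset S) \sum_(Q' <- fpowerset S | disj P' Q')
     T P' Q' (if (P' == P) && (Q' == Q) then mcast x else 0) = T P Q x.
Proof.
move=> T0 PS QS dPQ.
rewrite (bigD1_seq P) ?fset_uniq ?fpowersetE //=.
rewrite [X in _ + X]big1 ?addr0; last by move=> P' /negbTE nP; apply: big1 => Q' _; rewrite nP /= T0.
rewrite big_mkcond (bigD1_seq Q) ?fset_uniq ?fpowersetE //=.
rewrite [X in _ + X]big1 ?addr0; last by move=> Q' /negbTE nQ; rewrite nQ andbF T0; case: ifP.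
by rewrite dPQ !eqxx /= mcast_id.
Qed.

Lemma t1_0 S B1 B2 P Q : t1 S B1 B2 P Q 0 = 0.
Proof. by rewrite /t1 mcast0 (@phi0 _ _ _ Hlin) mcast0 (@phi0 _ _ _ Hlin) mcast0; case: ifP. Qed.
Lemma t2_0 S B1 B2 P Q : t2 S B1 B2 P Q 0 = 0.
Proof. by rewrite /t2 mcast0 (@phi0 _ _ _ Hlin) mcast0 (@phi0 _ _ _ Hlin) mcast0; case: ifP. Qed.
Lemma t3_0 S B1 B2 P Q : t3 S B1 B2 P Q 0 = 0.
Proof. by rewrite /t3 big1 // => X _; rewrite /H3 mcast0 (@phi0 _ _ _ Hlin) mcast0. Qed.
Lemma t4_0 S B1 B2 P Q : t4 S B1 B2 P Q 0 = 0.
Proof. by rewrite /t4 mcast0 t3_0 mcast0. Qed.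

Lemma single (Hw : weyl_rep a) S B1 B2 P Q (x : M (S `\` (P `|` Q))) :
  B1 `<=` S -> B2 `<=` S -> disj B1 B2 -> P `<=` S -> Q `<=` S -> disj P Q ->
  t1 S B1 B2 P Q x - t2 S B1 B2 P Q x = t3 S B1 B2 P Q x - t4 S B1 B2 P Q x.
Proof.
move=> s1 s2 d12 PS QS dPQ.
pose f : PPM M S := fun P' Q' => if (P' == P) && (Q' == Q) then mcast x else 0.
have W := Hw S f B1 B2 s1 s2 (eqP d12).
rewrite A12 // A21 // A3 // A4 // in W.
rewrite /f (@collapse S _ (t1 S B1 B2)) ?(@collapse S _ (t2 S B1 B2)) ?(@collapse S _ (t3 S B1 B2))
  ?(@collapse S _ (t4 S B1 B2)) // in W; try (move=> *; first [exact: t1_0 | exact: t2_0 | exact: t3_0 | exact: t4_0]).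
Qed.

Lemma main_bwd : weyl_rep a -> [/\ condB1 phi, condB2 phi & condB3 phi].
Proof.
move=> Hw; split.
- move=> S A B C D sA sB sC sD dAB dCD dAC dBD x.
  have dDC : disj D C by rewrite disjC.
  have I := single Hw S D C A B x sD sC dDC sA sB dAB.
  rewrite /t1 /t2 dAC dBD /t3 pow_disj // /t4 /t3 pow_disj // H3_0 subrr in I.
  move/eqP: I; rewrite subr_eq0 => /eqP I.
  have J := congr1 (fun z => mcast z : M (S `\` (C `|` D))) I.
  rewrite /= !mcastK in J; try fsolve.
  exact: J.
- move=> S A B C D sA sB sC sD dAB dCD dAC nBD x.
  have dDC : disj D C by rewrite disjC.
  have I := single Hw S D C A B x sD sC dDC sA sB dAB.
  rewrite /t1 /t2 dAC (negbTE nBD) /t3 pow_split0 /t4 /t3 pow_disj // H3_0 in I.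
  rewrite subr0 addrAC subrr add0r in I.
  have J := congr1 (fun z => mcast z : M (S `\` (C `|` D))) I.
  rewrite /= mcastK in J; last by fsolve.
  rewrite J mcast_sum big_seq_cond [RHS]big_seq_cond; apply: eq_bigr => X /andP [+ _].
  rewrite fpowersetE => XBD; rewrite /H3 mcastK //; fsolve.
- move=> S A B C D sA sB sC sD dAB dCD nAC nBD x.
  have dDC : disj D C by rewrite disjC.
  have I := single Hw S D C A B x sD sC dDC sA sB dAB.
  rewrite /t1 /t2 (negbTE nAC) (negbTE nBD) subrr in I.
  have I' : t3 S D C A B x = t4 S D C A B x by apply/eqP; rewrite -subr_eq0 -I.
  transitivity (mcast (t3 S D C A B x) : M (S `\` (C `|` D))).
    rewrite /t3 mcast_sum big_seq [RHS]big_seq; apply: eq_bigr => X; rewrite fpowersetE => XBD.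
    rewrite /H3 mcastK //; fsolve.
  rewrite I' /t4 mcastK; last by fsolve.
  rewrite mcast_id /t3 big_seq [RHS]big_seq; apply: eq_bigr => X; rewrite fpowersetE => XAC.
  rewrite /H3 mcastK //; fsolve.
Qed.

End Main.

Unset Implicit Arguments.
Set Strict Implicit.
Theorem proposition7p4 (k : comPzRingType) (M : {fset nat} -> lmodType k)
  (Mact : forall S T : {fset nat}, (nat -> nat) -> M S -> M T)
  (HM : isFBmod Mact)
  (a : forall S, PM M S -> PM M S)
  (phi : forall S A B : {fset nat}, M (S `\` B)%fset -> M (S `\` A)%fset)
  (Hlin : phi_linear phi) (Hnat : phi_natural phi Mact)
  (Ha : assoc_op phi a) :
  weyl_rep a <-> [/\ condB1 phi, condB2 phi & condB3 phi].
Proof.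
split.
- exact: (main_bwd _ _ _ _ Hlin Ha).
- by case=> c1 c2 c3; exact: (main_fwd _ _ _ _ Hlin Ha c1 c2 c3).
Qed.
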